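(* Let $\mathcal{H}$ be a separable, infinite dimensional, complex Hilbert space, let $\mathscr{U}$ be a free ultrafilter on $\mathbb{N}$, let $(T_{n})_{n\geq1}$ be a sequence in $\mathcal{B}(\mathcal{H})$ and let $B\in\mathcal{B}(\mathcal{H})$. (1) If $T_{n}\to B$ in the strong operator topology, then $B$ is unitarily equivalent to a restriction of $(T_{1},T_{2},\ldots)_{\mathscr{U}}$. (2) If $T_{n}\to B$ in the weak operator topology, then $B$ is unitarily equivalent to a compression of $(T_{1},T_{2},\ldots)_{\mathscr{U}}$. (3) If $T_{n}\to B$ in the $*$-strong operator topology, then $B$ is unitarily equivalent to a reducing part of $(T_{1},T_{2},\ldots)_{\mathscr{U}}$. (In each case $\sup_n\|T_n\|<\infty$, so the ultraproduct is well defined.)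
   Context: Let $\mathcal{H}^{\mathscr{U}}=\ell_\infty(\mathcal{H})/\{(x_n)_{n\ge1}\in\ell_\infty(\mathcal{H}):\lim_{n,\mathscr{U}}\|x_n\|=0\}$, with the image of $(x_n)$ denoted $(x_n)_{\mathscr{U}}$; it is a Hilbert space with inner product $\langle (x_n)_{\mathscr{U}},(y_n)_{\mathscr{U}}\rangle=\lim_{n,\mathscr{U}}\langle x_n,y_n\rangle$. For a norm-bounded sequence $(T_n)$ in $\mathcal{B}(\mathcal{H})$, the ultraproduct $(T_1,T_2,\ldots)_{\mathscr{U}}\in\mathcal{B}(\mathcal{H}^{\mathscr{U}})$ is $(x_n)_{\mathscr{U}}\mapsto(T_nx_n)_{\mathscr{U}}$. For an operator $T$ on a Hilbert space and a closed subspace $\mathcal{M}$: $T|_{\mathcal{M}}$ is a restriction if $\mathcal{M}$ is $T$-invariant; it is a reducing part if $\mathcal{M}$ is invariant under $T$ and $T^{*}$; the compression of $T$ to $\mathcal{M}$ is $PT|_{\mathcal{M}}$ with $P$ the orthogonal projection onto $\mathcal{M}$. $T_\alpha\to T$ in the $*$-strong operator topology means $T_\alpha\to T$ and $T_\alpha^*\to T^*$ strongly. *)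

(* Defs.v *)
From mathcomp Require Import all_boot all_order all_algebra.
From mathcomp Require Import reals.
From mathcomp Require Import complex.
Set Implicit Arguments. Unset Strict Implicit. Unset Printing Implicit Defensive.
Import Order.TTheory GRing.Theory Num.Theory.
Local Open Scope ring_scope.
Local Close Scope term_scope.

Section Defs.
Variable R : realType.
Local Notation C := (R[i]).
Variable V : lmodType C.
(* inner product, linear in the first argument *)
Variable ip : V -> V -> C.

Definition hnorm (x : V) : R := Num.sqrt (complex.Re (ip x x)).

Definition rseq_to (a : nat -> R) (l : R) : Prop :=
  forall e : R, 0 < e -> exists N : nat, forall n, (N <= n)%N -> `|a n - l| < e.
Definition cseq_to (a : nat -> C) (l : C) : Prop :=
  forall e : R, 0 < e -> exists N : nat, forall n, (N <= n)%N -> ComplexField.Normc.normc (a n - l) < e.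

Definition is_inner_product : Prop :=
  [/\ forall (a : C) (x y z : V), ip (a *: x + y) z = a * ip x z + ip y z,
      forall x y : V, ip y x = (ip x y)^*,
      forall x : V, complex.Im (ip x x) = 0 /\ 0 <= complex.Re (ip x x)
    & forall x : V, ip x x = 0 -> x = 0].

Definition is_complete : Prop :=
  forall u : nat -> V,
    (forall e : R, 0 < e -> exists N : nat, forall m n, (N <= m)%N -> (N <= n)%N ->
        hnorm (u m - u n) < e) ->
    exists l : V, rseq_to (fun n => hnorm (u n - l)) 0.

Definition is_hilbert : Prop := is_inner_product /\ is_complete.

Definition separable : Prop :=
  exists d : nat -> V, forall (x : V) (e : R), 0 < e -> exists n, hnorm (x - d n) < e.

Definition infinite_dimensional : Prop :=
  forall (n : nat) (s : 'I_n -> V), exists x : V,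
    ~ exists c : 'I_n -> C, x = \sum_(i < n) c i *: s i.

Definition bounded_op (T : V -> V) : Prop :=
  (forall (a : C) (x y : V), T (a *: x + y) = a *: T x + T y) /\
  exists M : R, forall x, hnorm (T x) <= M * hnorm x.

Definition is_adjoint (T S : V -> V) : Prop := forall x y, ip (T x) y = ip x (S y).

Definition sot_to (T : nat -> V -> V) (B : V -> V) : Prop :=
  forall x, rseq_to (fun n => hnorm (T n x - B x)) 0.
Definition wot_to (T : nat -> V -> V) (B : V -> V) : Prop :=
  forall x y, cseq_to (fun n => ip (T n x) y) (ip (B x) y).
Definition star_sot_to (T Tstar : nat -> V -> V) (B Bstar : V -> V) : Prop :=
  sot_to T B /\ sot_to Tstar Bstar.

End Defs.

Definition ultrafilter (U : (nat -> Prop) -> Prop) : Prop :=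
  [/\ U (fun _ => True),
      ~ U (fun _ => False),
      forall A B : nat -> Prop, U A -> (forall n, A n -> B n) -> U B,
      forall A B : nat -> Prop, U A -> U B -> U (fun n => A n /\ B n)
    & forall A : nat -> Prop, U A \/ U (fun n => ~ A n)].

Definition free_ultrafilter (U : (nat -> Prop) -> Prop) : Prop :=
  ultrafilter U /\ forall k : nat, ~ U (fun n => n = k).

Section Ultra.
Variable R : realType.
Local Notation C := (R[i]).
Variable V : lmodType C.
Variable ip : V -> V -> C.
Variable U : (nat -> Prop) -> Prop.
Local Notation hnorm := (hnorm ip).

Definition ulimR (a : nat -> R) (l : R) : Prop :=
  forall e : R, 0 < e -> U (fun n => `|a n - l| < e).
Definition ulimC (a : nat -> C) (l : C) : Prop :=
  forall e : R, 0 < e -> U (fun n => ComplexField.Normc.normc (a n - l) < e).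

(* elements of H^U are represented by bounded sequences x : nat -> V;
   (x_n)_U = (y_n)_U  iff  unull (x - y) *)
Definition ubounded (x : nat -> V) : Prop := exists M : R, forall n, hnorm (x n) <= M.
Definition uequiv (x y : nat -> V) : Prop := ulimR (fun n => hnorm (x n - y n)) 0.

(* W : H -> H^U (given through representatives) is a linear isometry;
   its range M is then a closed subspace of H^U and W : H -> M is unitary *)
Definition ultra_isometry (W : V -> nat -> V) : Prop :=
  [/\ forall x, ubounded (W x),
      forall (a : C) (x y : V), uequiv (W (a *: x + y)) (fun n => a *: W x n + W y n)
    & forall x y : V, ulimC (fun n => ip (W x n) (W y n)) (ip x y)].

(* B is unitarily equivalent (via W) to the restriction of (T_1,T_2,...)_U to the
   invariant subspace M = range W *)
Definition ultra_restriction (T : nat -> V -> V) (B : V -> V) : Prop :=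
  exists (W : V -> nat -> V),
  ultra_isometry W /\
  (forall x, exists y, uequiv (fun n => T n (W x n)) (W y)) /\
  (forall x, uequiv (fun n => T n (W x n)) (W (B x))).

(* B is unitarily equivalent (via W) to the compression P (T_n)_U |_M, M = range W,
   i.e. W^-1 P (T_n)_U W = B, i.e. <(T_n)_U W x, W y> = <B x, y> *)
Definition ultra_compression (T : nat -> V -> V) (B : V -> V) : Prop :=
  exists (W : V -> nat -> V),
  ultra_isometry W /\
  forall x y, ulimC (fun n => ip (T n (W x n)) (W y n)) (ip (B x) y).

(* reducing part: additionally M is invariant under ((T_n)_U)^* = (T_n^* )_U,
   where Tstar n is the adjoint of T n *)
Definition ultra_reducing (T Tstar : nat -> V -> V) (B : V -> V) : Prop :=
  exists (W : V -> nat -> V),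
  ultra_isometry W /\
  (forall x, exists y, uequiv (fun n => T n (W x n)) (W y)) /\
  (forall x, exists y, uequiv (fun n => Tstar n (W x n)) (W y)) /\
  (forall x, uequiv (fun n => T n (W x n)) (W (B x))).
End Ultra.

(* Main.v *)
Require Import Defs.
From mathcomp Require Import all_boot all_order all_algebra.
From mathcomp Require Import reals complex.
Import Order.TTheory GRing.Theory Num.Theory.
Local Open Scope ring_scope.

Lemma ev_in_U (U : (nat -> Prop) -> Prop) (HU : free_ultrafilter U) (P : nat -> Prop) :
  (exists N, forall n, (N <= n)%N -> P n) -> U P.
Proof.
case: HU => [[HT HF Hup Hcap Hcomp] Hfree] [N HN].
suff HN' : U (fun n => (N <= n)%N) by exact: (Hup _ _ HN' HN).
elim: N {HN} => [|N IH]; first by apply: (Hup _ _ HT) => n.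
have Hne : U (fun n => ~ n = N) by case: (Hcomp (fun n => n = N)) => // /Hfree.
apply: (Hup _ _ (Hcap _ _ IH Hne)) => n [H1 H2].
by rewrite ltn_neqAle H1 andbT; apply/eqP => E; apply: H2.
Qed.

Lemma ip0l (R : realType) (V : lmodType R[i]) (ip : V -> V -> R[i])
  (Hhil : is_hilbert ip) z : ip 0 z = 0.
Proof.
case: Hhil => [[Hlin _ _ _] _].
have := Hlin 1 0 0 z; rewrite scaler0 addr0 mul1r => /eqP.
by rewrite -subr_eq0 opprD addrA subrr sub0r oppr_eq0 => /eqP.
Qed.

Lemma hnorm0 (R : realType) (V : lmodType R[i]) (ip : V -> V -> R[i])
  (Hhil : is_hilbert ip) : hnorm ip 0 = 0.
Proof. by rewrite /hnorm ip0l //= sqrtr0. Qed.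

Lemma const_iso (R : realType) (V : lmodType R[i]) (ip : V -> V -> R[i])
  (Hhil : is_hilbert ip) (U : (nat -> Prop) -> Prop) (HU : free_ultrafilter U) :
  ultra_isometry ip U (fun x _ => x).
Proof.
split.
- by move=> x; exists (hnorm ip x) => n.
- move=> a x y e He. apply: (@ev_in_U U HU); exists 0%N => n _.
  by rewrite subrr hnorm0 // subr0 normr0.
- move=> x y e He; apply: (@ev_in_U U HU); exists 0%N => n _.
  rewrite subrr.
  suff -> : ComplexField.Normc.normc (0 : R[i]) = 0 by [].
  by rewrite /ComplexField.Normc.normc /= expr0n /= addr0 sqrtr0.
Qed.

Theorem lemma3p8 (R : realType) (V : lmodType R[i]) (ip : V -> V -> R[i])
  (Hhil : is_hilbert ip) (Hsep : separable ip) (Hinf : infinite_dimensional V)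
  (U : (nat -> Prop) -> Prop) (HU : free_ultrafilter U)
  (T : nat -> V -> V) (HT : forall n, bounded_op ip (T n))
  (B : V -> V) (HB : bounded_op ip B) :
  (sot_to ip T B -> ultra_restriction ip U T B) /\
  (wot_to ip T B -> ultra_compression ip U T B) /\
  (forall (Tstar : nat -> V -> V) (Bstar : V -> V),
     (forall n, is_adjoint ip (T n) (Tstar n)) -> is_adjoint ip B Bstar ->
     star_sot_to ip T Tstar B Bstar -> ultra_reducing ip U T Tstar B).
Proof.
have Hiso := @const_iso R V ip Hhil U HU.
have sotU : forall (S : nat -> V -> V) (A : V -> V), sot_to ip S A ->
    forall x, uequiv ip U (fun n => S n ((fun x _ => x) x n)) ((fun x _ => x) (A x) ).
  by move=> S A HS x e He; apply: (@ev_in_U U HU); exact: HS x e He.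
split; [|split].
- move=> Hs; exists (fun x _ => x); split; first exact: Hiso.
  split=> x; last exact: (sotU T B Hs x).
  by exists (B x); exact: (sotU T B Hs x).
- move=> Hw; exists (fun x _ => x); split; first exact: Hiso.
  move=> x y e He.
  by apply: (@ev_in_U U HU); exact: Hw x y e He.
- move=> Ts Bs _ _ [H1 H2]; exists (fun x _ => x); split; first exact: Hiso.
  split; [|split].
  + by move=> x; exists (B x); exact: (sotU T B H1 x).
  + by move=> x; exists (Bs x); exact: (sotU Ts Bs H2 x).
  + by move=> x; exact: (sotU T B H1 x).
Qed.
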